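(* Let $X$ be a nonsingular projective toric variety and $\beta\in H_2(X,\mathbb{Z})$. If the toric divisors $D$ with $\int_\beta D<0$ have nonempty common intersection, then $\beta$ is a linear combination, with nonnegative integer coefficients, of primitive curve classes.
   Context: $X$ has fan $\Delta$ in $N_{\mathbb R}$; each toric divisor $D$ corresponds to a ray generator $\rho\in N$, and toric divisors have nonempty common intersection iff their ray generators span a cone of $\Delta$ (the empty family has intersection $X$). A primitive set is a set $\{D_1,\ldots,D_k\}$ of toric divisors with empty intersection such that every proper subset has nonempty intersection. Then $\rho_1+\cdots+\rho_k$ lies in the relative interior of a unique cone $\langle\rho'_1,\ldots,\rho'_r\rangle\in\Delta$, with $\rho_1+\cdots+\rho_k=a_1\rho'_1+\cdots+a_r\rho'_r$, $a_i>0$. The associated primitive curve class is the unique $\beta\in H_2(X,\mathbb{Z})$ with $\int_\beta D_i=1$ for $i\le k$, $\int_\beta D'_j=-a_j$ for $j\le r$, and $\int_\beta D=0$ for all other toric divisors. *)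

(* Defs.v *)
From HB Require Import structures.
From mathcomp Require Import all_boot all_order all_algebra.
Set Implicit Arguments. Unset Strict Implicit. Unset Printing Implicit Defensive.
Import Order.TTheory GRing.Theory Num.Theory.
Local Open Scope ring_scope.

(* The ray generators are
   v i : 'rV[int]_n  (i : 'I_m), and a cone is encoded by the set of indices
   of the rays spanning it; Delta : {set {set 'I_m}} is the set of cones. *)

Definition vQ (n m : nat) (v : 'I_m -> 'rV[int]_n) (i : 'I_m) : 'rV[rat]_n :=
  map_mx intr (v i).

Definition in_cone (n m : nat) (v : 'I_m -> 'rV[int]_n) (S : {set 'I_m})
    (x : 'rV[rat]_n) : Prop :=
  exists c : 'I_m -> rat, (forall i, 0 <= c i) /\ x = \sum_(i in S) c i *: vQ v i.

Definition smooth_projective_fan (n m : nat) (v : 'I_m -> 'rV[int]_n)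
    (Delta : {set {set 'I_m}}) : Prop :=
  (forall i : 'I_m, [set i] \in Delta) /\
  (forall S T : {set 'I_m}, S \in Delta -> T \subset S -> T \in Delta) /\
  (* nonsingular: the generators of each cone are part of a Z-basis of N *)
  (forall S, S \in Delta -> exists M : 'M[int]_n, exists g : 'I_m -> 'I_n,
     M \in unitmx /\ {in S &, injective g} /\ (forall i, i \in S -> v i = row (g i) M)) /\
  (forall S T, S \in Delta -> T \in Delta -> forall x : 'rV[rat]_n,
     in_cone v S x -> in_cone v T x -> in_cone v (S :&: T) x) /\
  (forall x : 'rV[rat]_n, exists2 S, S \in Delta & in_cone v S x) /\
  (* projective: existence of a strictly convex piecewise linear support
     function, i.e. the fan is the normal fan of the polytope
     { u | <v i, u> <= a i for all i } *)
  (exists a : 'I_m -> rat, forall S, S \in Delta ->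
     (forall T, T \in Delta -> S \subset T -> T = S) ->
     exists u : 'cV[rat]_n,
       (forall i, i \in S -> (vQ v i *m u) 0 0 = a i) /\
       (forall i, i \notin S -> (vQ v i *m u) 0 0 < a i)).

(* H_2(X,Z) is identified with the lattice of linear relations among the ray
   generators: beta i = int_beta D_i, with sum_i beta i * v i = 0. *)
Definition curve_class (n m : nat) (v : 'I_m -> 'rV[int]_n)
    (beta : {ffun 'I_m -> int}) : Prop :=
  \sum_(i < m) beta i *: v i = 0.

Definition primitive_set (m : nat) (Delta : {set {set 'I_m}}) (P : {set 'I_m}) : Prop :=
  P \notin Delta /\ (forall Q : {set 'I_m}, Q \proper P -> Q \in Delta).

Definition primitive_class (n m : nat) (v : 'I_m -> 'rV[int]_n)
    (Delta : {set {set 'I_m}}) (P : {set 'I_m}) (beta : {ffun 'I_m -> int}) : Prop :=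
  primitive_set Delta P /\
  exists T : {set 'I_m}, exists a : 'I_m -> int,
    T \in Delta /\ (forall i, i \in T -> 0 < a i) /\
    \sum_(i in P) v i = \sum_(i in T) a i *: v i /\
    (forall i, beta i = (i \in P)%:Z - (if i \in T then a i else 0)).

Definition is_primitive_class (n m : nat) (v : 'I_m -> 'rV[int]_n)
    (Delta : {set {set 'I_m}}) (beta : {ffun 'I_m -> int}) : Prop :=
  exists P, primitive_class v Delta P beta.

(* Main.v *)
Require Import Defs.
From HB Require Import structures.
From mathcomp Require Import all_boot all_order all_algebra zify.
Import Order.TTheory GRing.Theory Num.Theory.
Set Implicit Arguments. Unset Strict Implicit.
Local Open Scope ring_scope.

Section P.
Variables (n m : nat) (v : 'I_m -> 'rV[int]_n) (Delta : {set {set 'I_m}}).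
Hypothesis Hfan : smooth_projective_fan v Delta.

Lemma coef_mx S (c : 'I_m -> rat) : S \in Delta ->
  exists (d : 'rV[rat]_n) (W : 'M[int]_n) (g : 'I_m -> 'I_n),
    d *m map_mx intr W = \sum_(i in S) c i *: vQ v i /\
    d *m map_mx intr W *m map_mx intr (invmx W) = d /\
    (forall j, j \in S -> d 0 (g j) = c j).
Proof.
move=> HS; have [_ [_ [Hns _]]] := Hfan.
have [M [g [Mu [ginj Hv]]]] := Hns S HS.
exists (\sum_(i in S) c i *: delta_mx (0:'I_1) (g i)), M, g; split; [|split].
- rewrite mulmx_suml; apply: eq_bigr => i Hi.
  by rewrite -scalemxAl -rowE /vQ (Hv i Hi) map_row.
- by rewrite -mulmxA -map_mxM mulmxV // map_mx1 mulmx1.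
- move=> j Hj; rewrite summxE (bigD1 j) //= big1 ?addr0.
    by rewrite !mxE !eqxx /= mulr1.
  move=> i /andP [Hi Hij]; rewrite !mxE eqxx /=.
  case: eqP => [E|]; last by rewrite mulr0.
  by move: Hij; rewrite (ginj _ _ Hi Hj (esym E)) eqxx.
Qed.

Lemma lin_indep S (c : 'I_m -> rat) : S \in Delta ->
  \sum_(i in S) c i *: vQ v i = 0 -> forall j, j \in S -> c j = 0.
Proof.
move=> HS H0 j Hj.
have [d [W [g [H1 [H2 H3]]]]] := coef_mx c HS.
by rewrite -H3 // -H2 H1 H0 !mul0mx mxE.
Qed.

Lemma int_coef S (c : 'I_m -> rat) (x : 'rV[int]_n) : S \in Delta ->
  map_mx intr x = \sum_(i in S) c i *: vQ v i ->
  forall j, j \in S -> exists z : int, c j = z%:~R.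
Proof.
move=> HS H0 j Hj.
have [d [W [g [H1 [H2 H3]]]]] := coef_mx c HS.
exists ((x *m invmx W) 0 (g j)).
by rewrite -H3 // -H2 H1 -H0 -map_mxM mxE.
Qed.

Lemma sum_restrict (S : {set 'I_m}) (c : 'I_m -> rat) (X : 'I_m -> 'rV[rat]_n) :
  (forall i, i \notin S -> c i = 0) ->
  \sum_(i in S) c i *: X i = \sum_i c i *: X i.
Proof.
move=> H; rewrite big_mkcond; apply: eq_bigr => i _.
by case: ifP => // /negbT /H ->; rewrite scale0r.
Qed.

Lemma vQ_sum (b : 'I_m -> int) :
  map_mx intr (\sum_i b i *: v i) = \sum_i (b i)%:~R *: vQ v i.
Proof. by rewrite map_mx_sum; apply: eq_bigr => i _; rewrite map_mxZ. Qed.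

Lemma dot_lin (c : 'I_m -> rat) (u : 'cV[rat]_n) :
  \sum_i c i * (vQ v i *m u) 0 0 = ((\sum_i c i *: vQ v i) *m u) 0 0.
Proof.
rewrite mulmx_suml summxE; apply: eq_bigr => i _.
by rewrite -scalemxAl !mxE.
Qed.

Definition maxcone (S : {set 'I_m}) :=
  S \in Delta /\ (forall T, T \in Delta -> S \subset T -> T = S).

Lemma max_cone S : S \in Delta -> exists S' : {set 'I_m}, S \subset S' /\ maxcone S'.
Proof.
move=> HS.
have P0 : (fun T : {set 'I_m} => (T \in Delta) && (S \subset T)) S.
  by rewrite HS subxx.
case: (@arg_maxnP _ S (fun T : {set 'I_m} => (T \in Delta) && (S \subset T)) (fun T : {set 'I_m} => #|T|) P0) => S' /andP [H1 H2] Hmax.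
exists S'; split => //; split => // T HT HST.
apply/eqP; rewrite eq_sym eqEcard HST /=.
by apply: Hmax; rewrite HT (subset_trans H2 HST).
Qed.

Lemma prim_exists Q : Q \notin Delta -> exists P : {set 'I_m}, P \subset Q /\ primitive_set Delta P.
Proof.
move=> HQ.
have P0 : (fun T : {set 'I_m} => (T \subset Q) && (T \notin Delta)) Q.
  by rewrite HQ subxx.
case: (@arg_minnP _ Q (fun T : {set 'I_m} => (T \subset Q) && (T \notin Delta)) (fun T : {set 'I_m} => #|T|) P0) => P /andP [H1 H2] Hmin.
exists (P : {set 'I_m}); split => //; split => // R HR.
apply/negPn/negP => HRn.
have := Hmin R; rewrite HRn (subset_trans (proper_sub HR) H1) => /(_ isT).
by rewrite leqNgt proper_card.
Qed.

Lemma int_proj : exists A : 'I_m -> int, forall S, maxcone S ->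
  exists u : 'cV[rat]_n,
    (forall i, i \in S -> (vQ v i *m u) 0 0 = (A i)%:~R) /\
    (forall i, i \notin S -> (vQ v i *m u) 0 0 < (A i)%:~R).
Proof.
have [_ [_ [_ [_ [_ [a Ha]]]]]] := Hfan.
pose D : int := \prod_i (denq (a i)).
have Dpos : 0 < D by apply: prodr_gt0 => i _; apply: denq_gt0.
exists (fun i => numq (a i) * \prod_(j | j != i) denq (a j)).
move=> S [HS Hmax]; have [u [Hu1 Hu2]] := Ha S HS Hmax.
have HA : forall i, (numq (a i) * \prod_(j | j != i) denq (a j))%:~R = D%:~R * a i :> rat.
  move=> i; rewrite /D [in RHS](bigD1 i) //= intrM numqE intrM.
  by rewrite [RHS]mulrC mulrA.
exists (D%:~R *: u); split => i Hi.
  by rewrite -scalemxAr mxE Hu1 // HA.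
rewrite -scalemxAr mxE HA ltr_pM2l ?Hu2 //.
by rewrite ltr0z.
Qed.

Lemma deg_ge0 (A : 'I_m -> int) (S : {set 'I_m}) (u : 'cV[rat]_n) (c : 'I_m -> rat) :
  (forall i, i \in S -> (vQ v i *m u) 0 0 = (A i)%:~R) ->
  (forall i, i \notin S -> (vQ v i *m u) 0 0 < (A i)%:~R) ->
  \sum_i c i *: vQ v i = 0 ->
  (forall i, c i < 0 -> i \in S) ->
  0 <= \sum_i c i * (A i)%:~R /\
  (forall i0, 0 < c i0 -> i0 \notin S -> 0 < \sum_i c i * (A i)%:~R).
Proof.
move=> H1 H2 H0 Hneg.
have E : \sum_i c i * (A i)%:~R =
         \sum_i c i * ((A i)%:~R - (vQ v i *m u) 0 0).
  transitivity (\sum_i c i * ((A i)%:~R - (vQ v i *m u) 0 0) +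
                \sum_i c i * (vQ v i *m u) 0 0).
    by rewrite -big_split /=; apply: eq_bigr => i _; rewrite -mulrDr subrK.
  by rewrite dot_lin H0 mul0mx mxE addr0.
have T : forall i, 0 <= c i * ((A i)%:~R - (vQ v i *m u) 0 0).
  move=> i; case: (boolP (i \in S)) => Hi.
    by rewrite H1 // subrr mulr0.
  apply: mulr_ge0; last by rewrite subr_ge0 ltW ?H2.
  by rewrite leNgt; apply/negP => /Hneg; rewrite (negbTE Hi).
rewrite E; split; first by apply: sumr_ge0 => i _.
move=> i0 Hc Hi0; rewrite (bigD1 i0) //=.
apply: ltr_pwDl; last by apply: sumr_ge0 => i _.
by apply: mulr_gt0; rewrite // subr_gt0 H2.
Qed.

Lemma mapI_inj (x y : 'rV[int]_n) : map_mx (intr : int -> rat) x = map_mx intr y -> x = y.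
Proof.
move=> E; apply/matrixP => i j.
by have := congr1 (fun M : 'rV[rat]_n => M i j) E; rewrite !mxE => /intr_inj.
Qed.

Lemma curveQ (b : 'I_m -> int) : \sum_i b i *: v i = 0 ->
  \sum_i (b i)%:~R *: vQ v i = 0.
Proof. by move=> H; rewrite -vQ_sum H map_mx0. Qed.

Lemma zero_case (beta : {ffun 'I_m -> int}) :
  curve_class v beta -> [set i | beta i < 0] \in Delta ->
  [set i | 0 < beta i] \in Delta -> beta = 0.
Proof.
move=> Hc HN HP.
have [_ [_ [_ [Hint _]]]] := Hfan.
pose cp i : rat := if 0 < beta i then (beta i)%:~R else 0.
pose cn i : rat := if beta i < 0 then (- beta i)%:~R else 0.
have Ecpn : forall i, (beta i)%:~R = cp i - cn i.
  move=> i; rewrite /cp /cn; case: (ltrgt0P (beta i)) => H.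
  - by rewrite subr0.
  - by rewrite sub0r intrN opprK.
  - by rewrite H subr0.
have cp0 : forall i, 0 <= cp i.
  by move=> i; rewrite /cp; case: ifP => // H; rewrite ler0z ltW.
have cn0 : forall i, 0 <= cn i.
  by move=> i; rewrite /cn; case: ifP => // H; rewrite ler0z oppr_ge0 ltW.
have Ew : \sum_i cn i *: vQ v i = \sum_i cp i *: vQ v i.
  apply/eqP; rewrite eq_sym -subr_eq0 -sumrB; apply/eqP.
  rewrite -[RHS](curveQ Hc); apply: eq_bigr => i _; by rewrite -scalerBl Ecpn.
have Sp : \sum_(i in [set i | 0 < beta i]) cp i *: vQ v i = \sum_i cp i *: vQ v i.
  by apply: sum_restrict => i; rewrite inE /cp => /negbTE ->.
have Sn : \sum_(i in [set i | beta i < 0]) cn i *: vQ v i = \sum_i cn i *: vQ v i.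
  by apply: sum_restrict => i; rewrite inE /cn => /negbTE ->.
have [c [_ Hc0]] : in_cone v ([set i | 0 < beta i] :&: [set i | beta i < 0])
                      (\sum_i cp i *: vQ v i).
  apply: Hint HP HN _ _ _.
    by exists cp; split => //; rewrite Sp.
  by exists cn; split => //; rewrite Sn Ew.
have W0 : \sum_i cp i *: vQ v i = 0.
  rewrite Hc0 big1 // => i; rewrite !inE => /andP [h1 h2].
  by move: (lt_trans h2 h1); rewrite ltxx.
have Hp := lin_indep HP (etrans Sp W0).
have Hn := lin_indep HN (etrans Sn (etrans Ew W0)).
apply/ffunP => i; rewrite ffunE.
case: (ltrgt0P (beta i)) => H //.
- have := Hp i; rewrite inE H => /(_ isT); rewrite /cp H => /eqP.
  by rewrite intr_eq0 => /eqP E; move: H; rewrite E ltxx.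
- have := Hn i; rewrite inE H => /(_ isT); rewrite /cn H => /eqP.
  by rewrite intr_eq0 oppr_eq0 => /eqP E; move: H; rewrite E ltxx.
Qed.

Lemma sumI (b c : 'I_m -> int) : (\sum_i b i * c i)%:~R = \sum_i (b i)%:~R * (c i)%:~R :> rat.
Proof. rewrite rmorph_sum /=; apply: eq_bigr => i _; by rewrite rmorphM. Qed.

Lemma prim_class_exists (P : {set 'I_m}) : primitive_set Delta P ->
  exists r, primitive_class v Delta P r.
Proof.
move=> Hprim.
have [_ [Hface [_ [_ [Hcomp _]]]]] := Hfan.
pose x := \sum_(i in P) v i.
have [S0 HS0 [c [c0 Hx]]] := Hcomp (map_mx intr x).
pose T := [set i in S0 | c i != 0].
have HT : T \in Delta.
  by apply: (Hface S0) => //; apply/subsetP => i; rewrite inE => /andP [].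
have HxT : map_mx intr x = \sum_(i in T) c i *: vQ v i.
  rewrite Hx (bigID (fun i => c i != 0)) /= [X in _ + X]big1 ?addr0.
    by apply: eq_bigl => i; rewrite inE.
  by move=> i /andP [_ /negPn /eqP ->]; rewrite scale0r.
have Hint := int_coef HT HxT.
pose a i := numq (c i).
have Hca : forall i, i \in T -> c i = (a i)%:~R.
  by move=> i Hi; have [z Ez] := Hint i Hi; rewrite /a Ez numq_int.
exists [ffun i => (i \in P)%:Z - (if i \in T then a i else 0)].
split => //; exists T, a; split; [done | split; [|split]].
- move=> i Hi; have := Hi; rewrite inE => /andP [_ cnz].
  by rewrite -(ltr0z rat) -Hca // lt_neqAle eq_sym cnz c0.
- apply: mapI_inj; rewrite HxT map_mx_sum; apply: eq_bigr => i Hi.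
  by rewrite map_mxZ Hca.
- by move=> i; rewrite ffunE.
Qed.

Lemma prim_curve P r : primitive_class v Delta P r -> \sum_i r i *: v i = 0.
Proof.
move=> [_ [T [a [_ [_ [Hrel Hr]]]]]].
under eq_bigr do rewrite Hr scalerBl.
rewrite sumrB.
have E1 : \sum_i (i \in P)%:Z *: v i = \sum_(i in P) v i.
  rewrite [RHS]big_mkcond; apply: eq_bigr => i _.
  by case: (i \in P); rewrite ?scale1r ?scale0r.
have E2 : \sum_i (if i \in T then a i else 0) *: v i = \sum_(i in T) a i *: v i.
  rewrite [RHS]big_mkcond; apply: eq_bigr => i _.
  by case: (i \in T); rewrite ?scale0r.
by rewrite E1 E2 Hrel subrr.
Qed.

Section Deg.
Variable A : 'I_m -> int.
Hypothesis HA : forall S, maxcone S ->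
  exists u : 'cV[rat]_n,
    (forall i, i \in S -> (vQ v i *m u) 0 0 = (A i)%:~R) /\
    (forall i, i \notin S -> (vQ v i *m u) 0 0 < (A i)%:~R).

Lemma degI_ge0 (beta : {ffun 'I_m -> int}) :
  curve_class v beta -> [set i | beta i < 0] \in Delta ->
  0 <= \sum_i beta i * A i.
Proof.
move=> Hc HN.
have [S [HNS HS]] := max_cone HN.
have [u [H1 H2]] := HA HS.
have Hneg : forall i, (beta i)%:~R < 0 :> rat -> i \in S.
  by move=> i Hi; apply: (subsetP HNS); rewrite inE -(ltrz0 rat).
have [D _] := deg_ge0 (c := fun i => (beta i)%:~R) H1 H2 (curveQ Hc) Hneg.
by rewrite -(ler0z rat) sumI.
Qed.

Lemma degI_pos P r : primitive_class v Delta P r -> 0 < \sum_i r i * A i.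
Proof.
move=> Hr; have Hcr := prim_curve Hr.
have [_ [Hface _]] := Hfan.
move: Hr => [Hprim [T [a [HT [Ha [Hrel Hri]]]]]].
have [S [HTS HS]] := max_cone HT.
have [u [H1 H2]] := HA HS.
have Hneg : forall i, (r i)%:~R < 0 :> rat -> i \in S.
  move=> i; rewrite ltrz0 Hri; case: (boolP (i \in T)) => Hi.
    by move=> _; apply: (subsetP HTS).
  by rewrite subr0; case: (i \in P).
have [_ D] := deg_ge0 (c := fun i => (r i)%:~R) H1 H2 (curveQ Hcr) Hneg.
case: (boolP (P \subset S)) => [sub | /subsetPn [i0 Hi0P Hi0S]].
  by exfalso; case: Hprim => /negP H _; apply: H; apply: (Hface S) => //; case: HS.
have Hi0T : i0 \notin T by apply: contra Hi0S; apply: (subsetP HTS).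
have := D i0; rewrite Hri Hi0P (negbTE Hi0T) subr0 => /(_ isT Hi0S).
by rewrite -(ltr0z rat) sumI.
Qed.

Lemma main_ind k : forall beta : {ffun 'I_m -> int},
  curve_class v beta -> [set i | beta i < 0] \in Delta ->
  \sum_i beta i * A i < k%:Z ->
  exists s : seq {ffun 'I_m -> int},
    (forall b, b \in s -> is_primitive_class v Delta b) /\
    beta = \sum_(b <- s) b.
Proof.
have [_ [Hface _]] := Hfan.
elim: k => [|k IH] beta Hc HN Hdeg.
  by have := degI_ge0 Hc HN; rewrite leNgt Hdeg.
case: (boolP ([set i | 0 < beta i] \in Delta)) => HP.
  by exists [::]; split => //; rewrite big_nil (zero_case Hc HN HP).
have [P [HPsub Hprim]] := prim_exists HP.
have [r Hr] := prim_class_exists Hprim.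
have Hcr := prim_curve Hr.
have Hrp := degI_pos Hr.
have Hr' := Hr; move: Hr' => [_ [T [a [HT [Ha [Hrel Hri]]]]]].
pose beta' := beta - r.
have Hc' : curve_class v beta'.
  rewrite /curve_class; under eq_bigr do rewrite !ffunE scalerBl.
  by rewrite sumrB Hc Hcr subrr.
have HN' : [set i | beta' i < 0] \in Delta.
  apply: (Hface _ _ HN); apply/subsetP => i; rewrite !inE !ffunE Hri.
  have t0 : 0 <= (if i \in T then a i else 0) by case: ifP => // /Ha /ltW.
  move: t0; case: (boolP (i \in P)) => HiP.
    have bpos : 0 < beta i by move/subsetP: HPsub => /(_ i HiP); rewrite inE.
    move: bpos; set t := (if _ then _ else _).
    rewrite (_ : ((true : nat) : int) = 1) //; clearbody t; move: (beta i) t => x y; lia.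
  set t := (if _ then _ else _).
  rewrite (_ : ((false : nat) : int) = 0) //; clearbody t; move: (beta i) t => x y; lia.
have Hd : \sum_i beta' i * A i = \sum_i beta i * A i - \sum_i r i * A i.
  by under eq_bigr do rewrite !ffunE mulrBl; rewrite sumrB.
have [s [Hs1 Hs2]] : exists s : seq {ffun 'I_m -> int},
    (forall b, b \in s -> is_primitive_class v Delta b) /\
    beta' = \sum_(b <- s) b.
  by apply: IH => //; move: Hdeg Hrp; rewrite Hd; lia.
exists (r :: s); split.
  by move=> b; rewrite inE => /orP [/eqP -> | /Hs1] //; exists P.
by rewrite big_cons -Hs2 /beta' addrC subrK.
Qed.
End Deg.
End P.

Theorem proposition2p3 (n m : nat) (v : 'I_m -> 'rV[int]_n)
    (Delta : {set {set 'I_m}}) (beta : {ffun 'I_m -> int}) :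
  smooth_projective_fan v Delta ->
  curve_class v beta ->
  [set i | beta i < 0] \in Delta ->
  exists s : seq {ffun 'I_m -> int},
    (forall b, b \in s -> is_primitive_class v Delta b) /\
    beta = \sum_(b <- s) b.
Proof.
move=> Hfan Hc HN.
have [A HA] := int_proj Hfan.
have H := @main_ind n m v Delta Hfan A HA (absz (\sum_i beta i * A i)%R).+1 beta Hc HN.
apply: H.
set d := (\sum_i _)%R; lia.
Qed.
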